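(* Let $\Sigma$ be an alphabet with $|\Sigma| \geq 3$ and let $n \geq 1$. If $g \colon \mathcal{T}(\Sigma)^n \to \mathcal{T}(\Sigma)$ is congruence preserving, then there exists a polynomial $P_g(x_1,\ldots,x_n)$ such that $g = \widetilde{P_g}$. In other words, the algebra $\langle \mathcal{T}(\Sigma), \star\rangle$ is affine complete.
   Context: Let $\Sigma$ be an alphabet not containing $0,1$. A binary tree over $\Sigma$ is a finite set $t \subseteq \{0,1\}^*\Sigma$ such that for any $ua, vb \in t$ with $ua \neq vb$, $u$ is not a prefix of $v$ and $v$ is not a prefix of $u$. $\mathcal{T}(\Sigma)$ denotes the set of all such trees. The empty tree is denoted $\mathbf{0}$, and each letter $a\in\Sigma$ is identified with the tree $\{a\}$. The binary operation is $t \star t' = 0.t \cup 1.t'$ (prefix every word of $t$ by $0$ and every word of $t'$ by $1$); in particular $\mathbf{0}\star\mathbf{0}=\mathbf{0}$. A congruence on $\langle \mathcal{T}(\Sigma),\star\rangle$ is an equivalence relation $\sim$ on $\mathcal{T}(\Sigma)$ such that $t_1\sim t_1'$ and $t_2 \sim t_2'$ imply $t_1\star t_2 \sim t_1'\star t_2'$. A function $f\colon \mathcal{T}(\Sigma)^n \to \mathcal{T}(\Sigma)$ is congruence preserving (CP) if for every congruence $\sim$ and all $t_1,\ldots,t_n,t_1',\ldots,t_n'$, $t_i\sim t_i'$ for all $i$ implies $f(t_1,\ldots,t_n)\sim f(t_1',\ldots,t_n')$. Let $x_1,\ldots,x_n \notin \Sigma$ be variables. A polynomial $P(x_1,\ldots,x_n)$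 is a tree over the alphabet $\Sigma\cup\{x_1,\ldots,x_n\}$. Its polynomial function $\widetilde P\colon \mathcal{T}(\Sigma)^n\to\mathcal{T}(\Sigma)$ is defined, for $\vec u=\langle t_1,\ldots,t_n\rangle$, by $\widetilde P(\vec u)=P$ if $P=\mathbf 0$ or $P\in\Sigma$; $\widetilde P(\vec u)=t_i$ if $P=x_i$; and $\widetilde P(\vec u)=\widetilde{P_1}(\vec u)\star\widetilde{P_2}(\vec u)$ if $P=P_1\star P_2$. *)

(* Defs.v *)
From HB Require Import structures.
From mathcomp Require Import all_boot.
From mathcomp Require Import finmap.

Set Implicit Arguments.
Unset Strict Implicit.
Unset Printing Implicit Defensive.

Local Open Scope fset_scope.

(* Words of {0,1}^* A are represented as pairs (u, a) : seq bool * A,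
   with false standing for 0 and true for 1. *)
Definition word (A : Type) := (seq bool * A)%type.

Definition is_tree (A : choiceType) (t : {fset word A}) : bool :=
  all (fun x => all (fun y => (x == y) ||
         (~~ prefix x.1 y.1 && ~~ prefix y.1 x.1)) (enum_fset t)) (enum_fset t).

Definition tree (A : choiceType) := {t : {fset word A} | is_tree t}.

Lemma is_tree0 (A : choiceType) : is_tree (fset0 : {fset word A}).
Proof. by []. Qed.

Definition tree0 (A : choiceType) : tree A := exist _ fset0 (is_tree0 A).

Definition lift (A : choiceType) (b : bool) (t : {fset word A}) : {fset word A} :=
  [fset ((b :: x.1), x.2) | x in t].

Definition fstar (A : choiceType) (t t' : {fset word A}) : {fset word A} :=
  lift false t `|` lift true t'.

(* The operation on trees.  Since t * t' is always a tree when t, t' are,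
   insubd never falls back on its default value. *)
Definition star (A : choiceType) (t t' : tree A) : tree A :=
  insubd (tree0 A) (fstar (val t) (val t')).

Definition congruence (A : choiceType) (r : tree A -> tree A -> Prop) : Prop :=
  [/\ (forall t, r t t),
      (forall t t', r t t' -> r t' t),
      (forall t1 t2 t3, r t1 t2 -> r t2 t3 -> r t1 t3) &
      (forall t1 t1' t2 t2', r t1 t1' -> r t2 t2' -> r (star t1 t2) (star t1' t2'))].

Definition congruence_preserving (A : choiceType) (n : nat)
    (f : n.-tuple (tree A) -> tree A) : Prop :=
  forall r : tree A -> tree A -> Prop, congruence r ->
  forall ts ts' : n.-tuple (tree A),
    (forall i : 'I_n, r (tnth ts i) (tnth ts' i)) -> r (f ts) (f ts').

(* Decomposition of a (raw) tree P = P1 * P2 : half b P is the subtree Pb,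
   i.e. the words of P starting with b, with that first letter removed. *)
Definition half (B : choiceType) (b : bool) (P : {fset word B}) : {fset word B} :=
  [fset (behead x.1, x.2) | x in P & ohead x.1 == Some b].

(* Polynomials in x_1..x_n are trees over the alphabet A + 'I_n
   (inr i is the variable x_(i+1)).
   The natural number k is fuel (depth bound). *)
Fixpoint evalF (A : choiceType) (n : nat) (k : nat) (ts : n.-tuple (tree A))
    (P : {fset word (A + 'I_n)%type}) : {fset word A} :=
  match k with
  | 0 => fset0
  | k'.+1 =>
    if P == fset0 then fset0 else
    match [seq x.2 | x <- enum_fset P & x.1 == [::]] with
    | c :: _ =>
        match c with
        | inl a => [fset (([::] : seq bool), a)]
        | inr i => val (tnth ts i)
        end
    | [::] => fstar (evalF k' ts (half false P)) (evalF k' ts (half true P))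
    end
  end.

Definition depth (B : choiceType) (P : {fset word B}) : nat :=
  \max_(x <- enum_fset P) size x.1.

(* The polynomial function P~ : T(A)^n -> T(A).  Its value is always a
   tree, so insubd never falls back on its default value. *)
Definition poly_fun (A : choiceType) (n : nat) (P : tree (A + 'I_n)%type)
    (ts : n.-tuple (tree A)) : tree A :=
  insubd (tree0 A) (evalF (depth (val P)).+1 ts (val P)).

(* Main.v *)
Require Import Defs.
From mathcomp Require Import all_boot.
From mathcomp Require Import finmap.
Set Implicit Arguments.
Unset Strict Implicit.
Unset Printing Implicit Defensive.
Local Open Scope fset_scope.


Section Gen.
Variable A : choiceType.
Implicit Types t : {fset word A}.

Lemma is_treeP t :
  reflect (forall x y, x \in t -> y \in t -> x = y \/ (~~ prefix x.1 y.1 /\ ~~ prefix y.1 x.1)) (is_tree t).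
Proof.
apply: (iffP allP) => [H x y xt yt|H x xt].
  have /allP/(_ y yt) := H x xt.
  by case/orP=> [/eqP->|/andP[]]; [left|right].
apply/allP => y yt; case: (H x y xt yt) => [->|[h1 h2]]; first by rewrite eqxx.
by rewrite h1 h2 orbT.
Qed.

Lemma treeW t x y z : is_tree t -> x \in t -> y \in t -> y.1 = x.1 ++ z -> x = y.
Proof.
move=> /is_treeP H xt yt e; case: (H x y xt yt) => // [[h1 _]].
by move: h1; rewrite e prefix_prefix.
Qed.

Lemma treeW' t x y z : is_tree t -> x \in t -> y \in t -> y.1 = x.1 ++ z -> z = [::] /\ x.2 = y.2.
Proof.
move=> Ht xt yt e; have exy := treeW Ht xt yt e.
split; last by rewrite exy.
by move: e; rewrite exy; elim: (y.1) => [|b s IH] //= [].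
Qed.

Lemma cat_comparable (x y x' y' : seq bool) : x ++ y = x' ++ y' ->
  exists z, x' = x ++ z \/ x = x' ++ z.
Proof.
elim: x x' => [|b x IH] [|b' x'] /=.
- by move=> _; exists [::]; left.
- by move=> _; exists (b' :: x'); left.
- by move=> _; exists (b :: x); right.
- case=> -> /IH [z [->|->]]; exists z; [left|right]; by [].
Qed.

End Gen.

Definition subst (A B : choiceType) (phi : A -> {fset word B}) (t : {fset word A}) : {fset word B} :=
  [fset (x.1 ++ y.1, y.2) | x in t, y in phi x.2].

Lemma in_subst (A B : choiceType) (phi : A -> {fset word B}) t w :
  w \in subst phi t <-> exists x y, [/\ x \in t, y \in phi x.2 & w = (x.1 ++ y.1, y.2)].
Proof.
split.
  by move=> /imfset2P [x xt [y yp ->]]; exists x, y.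
by move=> [x [y [xt yp ->]]]; apply/imfset2P; exists x => //; exists y.
Qed.

Lemma in_lift (A : choiceType) b (t : {fset word A}) w :
  (w \in Defs.lift b t) = (ohead w.1 == Some b) && ((behead w.1, w.2) \in t).
Proof.
apply/imfsetP/andP => [[x xt ->]|[/eqP h wt]] /=.
  by rewrite eqxx; case: x xt.
exists (behead w.1, w.2) => //.
by case: w h wt => [[|c p] d] //= [->].
Qed.

Lemma in_fstar (A : choiceType) (X Y : {fset word A}) w :
  (w \in fstar X Y) = if w.1 is b :: p then (p, w.2) \in (if b then Y else X) else false.
Proof.
rewrite /fstar in_fsetU !in_lift; case: w => [[|[] p] c] //=; by rewrite ?orbF.
Qed.

Lemma fstar_tree (A : choiceType) (X Y : {fset word A}) :
  is_tree X -> is_tree Y -> is_tree (fstar X Y).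
Proof.
move=> HX HY; apply/is_treeP => [[p c] [q d]]; rewrite !in_fstar /=.
case: p => [|b p] //; case: q => [|b' q] // h1 h2.
case E: (b == b').
  move/eqP: E h2 => <- h2.
  have HT : is_tree (if b then Y else X) by case: b h1 h2.
  have [[-> ->]|[n1 n2]] := (elimT (is_treeP _) HT) _ _ h1 h2; [by left|right].
  by rewrite /= eqxx /= n1 n2.
by right; rewrite /= E eq_sym E.
Qed.

Lemma val_star (A : choiceType) (t t' : tree A) : val (star t t') = fstar (val t) (val t').
Proof. by rewrite /star insubdK //; apply: fstar_tree; apply: valP. Qed.

Lemma subst_fstar (A B : choiceType) (phi : A -> {fset word B}) X Y :
  subst phi (fstar X Y) = fstar (subst phi X) (subst phi Y).
Proof.
apply/fsetP => w; apply/idP/idP.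

  move=> /(in_subst phi (fstar X Y) w) [x [y [xt yp ->]]].
  move: xt; rewrite in_fstar /=; case: x yp => [[|b p] c] //= yp xt.
  rewrite in_fstar /=; case: b xt => xt; apply/in_subst; exists (p, c), y; split => //.
rewrite in_fstar; case: w => [[|b p] c] //= H.
have {H} : (p, c) \in subst phi (if b then Y else X) by case: b H.
move/in_subst => [x [y [xt yp [-> ->]]]].
apply/in_subst; exists (b :: x.1, x.2), y; split => //.
by rewrite in_fstar /= -surjective_pairing.
Qed.

Section Spec.
Variable S : choiceType.
Implicit Types (X : {fset word S}) (c d e : S).

Definition sing c : {fset word S} := [fset (([::] : seq bool), c)].
Definition phres c : S -> {fset word S} := fun d => if d == c then sing d else fset0.
Definition phsub c (s : {fset word S}) : S -> {fset word S} :=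
  fun d => if d == c then s else sing d.

Lemma in_sing c w : (w \in sing c) = (w == ([::], c)).
Proof. by rewrite in_fset1. Qed.

Lemma in_subst_res c X w : (w \in subst (phres c) X) = (w \in X) && (w.2 == c).
Proof.
apply/idP/andP.
  move/in_subst.
  move=> [x [y [xt]]]; rewrite /phres; case: eqP => [E|_]; last by rewrite in_fset0.
  by rewrite in_sing => /eqP -> ->; rewrite cats0 /= -surjective_pairing E.
move=> [wX /eqP E]; apply/in_subst; exists w, ([::], w.2); split => //.
  by rewrite /phres E eqxx in_sing.
by rewrite cats0 -surjective_pairing.
Qed.

Lemma in_subst_sub c s X w : w \in subst (phsub c s) X <->
  (w \in X /\ w.2 != c) \/ exists x y, [/\ (x, c) \in X, (y, w.2) \in s & w.1 = x ++ y].
Proof.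
split.
  move/in_subst=> [x [y [xt]]]; rewrite /phsub; case: eqP => [E|/eqP N].
    move=> ys ->; right; exists x.1, y.1; split => //=.
      by rewrite -E -surjective_pairing.
    by rewrite -surjective_pairing.
  by rewrite in_sing => /eqP -> ->; left; rewrite cats0 /= -surjective_pairing.
case=> [[wX N]|[x [y [xX ys E]]]]; apply/in_subst.
  exists w, ([::], w.2); split => //.
    by rewrite /phsub (negbTE N) in_sing.
  by rewrite cats0 -surjective_pairing.
exists (x, c), (y, w.2); split => //.
  by rewrite /phsub eqxx.
by rewrite -E -surjective_pairing.
Qed.

Lemma subst_id c s X : (forall x, x \in X -> x.2 != c) -> subst (phsub c s) X = X.
Proof.
move=> H; apply/fsetP => w; apply/idP/idP.
  by move/in_subst_sub => [[]//|[x [y [xX _ _]]]]; move: (H _ xX); rewrite eqxx.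
by move=> wX; apply/in_subst_sub; left; split => //; apply: H.
Qed.

Lemma subst_res0 c X : (forall x, x \in X -> x.2 != c) -> subst (phres c) X = fset0.
Proof.
move=> H; apply/fsetP => w; rewrite in_subst_res in_fset0.
by apply/andP => -[/H /negbTE -> ].
Qed.

Lemma subst_res_id c X : (forall x, x \in X -> x.2 = c) -> subst (phres c) X = X.
Proof.
move=> H; apply/fsetP => w; rewrite in_subst_res.
by case wX: (w \in X) => //=; rewrite H // eqxx.
Qed.

Lemma subst_res_idem c X : subst (phres c) (subst (phres c) X) = subst (phres c) X.
Proof. by apply: subst_res_id => x; rewrite in_subst_res => /andP[_ /eqP]. Qed.

Lemma subst0 (B : choiceType) (phi : S -> {fset word B}) : subst phi fset0 = fset0.
Proof. by apply/fsetP => w; rewrite in_fset0; apply/negP => /in_subst [x [y []]]; rewrite in_fset0. Qed.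

Lemma subst_leaf c s : subst (phsub c s) (sing c) = s.
Proof.
apply/fsetP => w; apply/idP/idP.
  move/in_subst_sub => [[]|[x [y [xX ys E]]]].
    by rewrite in_sing => /eqP -> /=; rewrite eqxx.
  by move: xX; rewrite in_sing => /eqP [xE]; rewrite [w]surjective_pairing E xE.
move=> ws; apply/in_subst_sub; right; exists [::], w.1; split => //.
- by rewrite in_sing.
- by rewrite -surjective_pairing.
Qed.

Lemma sing_tree c : is_tree (sing c).
Proof. by apply/is_treeP => x y; rewrite !in_sing => /eqP -> /eqP ->; left. Qed.

Lemma catL (T : eqType) (a b c : seq T) : a ++ b = a ++ c -> b = c.
Proof. by elim: a => //= x a IH [] /IH. Qed.

Lemma subst_tree (B : choiceType) (phi : S -> {fset word B}) X :
  is_tree X -> (forall c, is_tree (phi c)) -> is_tree (subst phi X).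
Proof.
move=> HX Hphi; apply/is_treeP => w1 w2.
move=> /in_subst [x1 [y1 [x1X y1p ->]]] /in_subst [x2 [y2 [x2X y2p ->]]] /=.
have key : forall x1 y1 x2 y2 z, x1 \in X -> x2 \in X -> y1 \in phi x1.2 -> y2 \in phi x2.2 ->
    x2.1 ++ y2.1 = (x1.1 ++ y1.1) ++ z -> x1 = x2 /\ y1 = y2.
  move=> a1 b1 a2 b2 z a1X a2X b1p b2p E; have E2 := E; rewrite -catA in E2.
  have [z' [E'|E']] := cat_comparable (esym E2).
    have ea := treeW HX a1X a2X E'; subst a2.
  have := catL E2. move=> E3. split => //. exact: (treeW (Hphi _) b1p b2p E3).
  have ea := treeW HX a2X a1X E'; subst a2.
  have := catL E2. move=> E3. split => //. exact: (treeW (Hphi _) b1p b2p E3).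
case E: ((x1.1 ++ y1.1, y1.2) == (x2.1 ++ y2.1, y2.2)); [left; apply/eqP => // | right].
split; apply/negP => /prefixP [z Hz].
  by have [e1 e2] := key _ _ _ _ _ x1X x2X y1p y2p Hz; move: E; rewrite e1 e2 eqxx.
by have [e1 e2] := key _ _ _ _ _ x2X x1X y2p y1p Hz; move: E; rewrite e1 e2 eqxx.
Qed.
End Spec.

Section Eval.
Variables (S : choiceType) (n : nat) (ts : n.-tuple (tree S)).

Definition psi (c : S + 'I_n) : {fset word S} :=
  match c with inl a => [fset (([::] : seq bool), a)] | inr i => val (tnth ts i) end.

Lemma in_half (B : choiceType) b (P : {fset word B}) w :
  (w \in Defs.half b P) = ((b :: w.1, w.2) \in P).
Proof.
apply/imfsetP/idP => /=.
  move=> [x]; rewrite inE => /andP[xP /eqP h] ->.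
  by case: x xP h => [[|c p] d] //= xP [<-].
move=> H; exists (b :: w.1, w.2); last by rewrite /= -surjective_pairing.
by rewrite inE H /= eqxx.
Qed.

Lemma depth_leP (B : choiceType) (P : {fset word B}) m :
  reflect (forall x, x \in P -> size x.1 <= m) (depth P <= m).
Proof.
apply: (iffP (bigmax_leqP_seq _ _ _ _)) => H x xP; first exact: H.
by move=> _; apply: H.
Qed.

Lemma half_tree (B : choiceType) b (P : {fset word B}) : is_tree P -> is_tree (Defs.half b P).
Proof.
move=> HP; apply/is_treeP => x y; rewrite !in_half => xP yP.
case E: (x == y); first by left; apply/eqP.
right; split; apply/negP => /prefixP [z Hz].
  have e : (b :: x.1, x.2) = (b :: y.1, y.2) by apply: (treeW (z:=z) HP xP yP); rewrite /= Hz.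
  by case: e => e1 e2; move: E; rewrite [x]surjective_pairing [y]surjective_pairing e1 e2 eqxx.
have e : (b :: y.1, y.2) = (b :: x.1, x.2) by apply: (treeW (z:=z) HP yP xP); rewrite /= Hz.
by case: e => e1 e2; move: E; rewrite [x]surjective_pairing [y]surjective_pairing e1 e2 eqxx.
Qed.

Lemma evalF_subst k (P : {fset word (S + 'I_n)}) :
  is_tree P -> depth P < k -> evalF k ts P = subst psi P.
Proof.
elim: k P => [//|k IH] P HP Hd /=.
case: eqP => [->|neP]; first by rewrite subst0.
case E: [seq x.2 | x <- enum_fset P & x.1 == [::]] => [|c l].
  have nr : forall x, x \in P -> x.1 != [::].
    move=> x xP; apply/negP => /eqP x1.
    have : x.2 \in [seq x.2 | x <- enum_fset P & x.1 == [::]].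
      by apply: map_f; rewrite mem_filter x1 eqxx.
    by rewrite E.
  have Pe : P = fstar (Defs.half false P) (Defs.half true P).
    apply/fsetP => w; rewrite in_fstar.
    case: w => [[|[] p] c] /=; rewrite ?in_half //.
    by apply/negP => /nr.
  have Hd' : forall b, depth (Defs.half b P) < k.
    move=> b; rewrite ltnS in Hd; move/depth_leP: Hd => Hd.
    have : depth (Defs.half b P) <= k.-1.
      apply/depth_leP => x; rewrite in_half => /Hd /=.
      by case: k {IH Hd} => //.
    have k0 : 0 < k.
      case: (fset_0Vmem P) => [/eqP|[x xP]]; first by move/eqP: neP => /negbTE ->.
      have := Hd x xP; have := nr x xP; case: (x.1) => //= _ l _.
      by case: k {IH Hd}.
    by move=> h; apply: (leq_ltn_trans h); rewrite prednK.
  rewrite {3}Pe subst_fstar !IH //; by apply: half_tree.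
have : c \in [seq x.2 | x <- enum_fset P & x.1 == [::]] by rewrite E mem_head.
case/mapP => x; rewrite mem_filter => /andP [/eqP x1 xP] ->.
have -> : subst psi P = psi x.2.
  apply/fsetP => w; apply/idP/idP.
    move/in_subst => [x' [y [x'P yp ->]]].
    have ex : x = x' by apply: (treeW (z := x'.1) HP xP x'P); rewrite x1.
    by subst x'; rewrite x1 /= -surjective_pairing.
  move=> wp; apply/in_subst; exists x, w; split => //.
  by rewrite x1 /= -surjective_pairing.
by case: (x.2).
Qed.
End Eval.

Section Main.
Variables (S : choiceType) (n : nat) (g : n.-tuple (tree S) -> tree S).
Hypothesis Hg : congruence_preserving g.
Variables (a b : S).
Hypothesis Hab : a != b.
Implicit Types (X : {fset word S}) (c d e : S).

Definition mk (X : {fset word S}) : tree S := insubd (tree0 S) X.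
Lemma val_mk X : is_tree X -> val (mk X) = X.
Proof. exact: insubdK. Qed.

Definition leaf c := mk (sing c).
Lemma val_leaf c : val (leaf c) = sing c.
Proof. exact/val_mk/sing_tree. Qed.

Lemma cp_subst (phi : S -> {fset word S}) ts ts' :
  (forall i, subst phi (val (tnth ts i)) = subst phi (val (tnth ts' i))) ->
  subst phi (val (g ts)) = subst phi (val (g ts')).
Proof.
move=> H; apply: (Hg (r := fun t t' => subst phi (val t) = subst phi (val t'))) => //.
split => //.
- by move=> ? ? ? -> ->.
- by move=> t1 t1' t2 t2' e1 e2; rewrite !val_star !subst_fstar e1 e2.
Qed.

Local Notation F ts := (val (g ts)).
Definition zero : n.-tuple (tree S) := [tuple tree0 S | _ < n].
Local Notation Z := (F zero).
Definition upd (ts : n.-tuple (tree S)) (i : 'I_n) t : n.-tuple (tree S) :=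
  [tuple (if j == i then t else tnth ts j) | j < n].
Definition delta i c := upd zero i (leaf c).
Definition labt (X : {fset word S}) d := forall x, x \in X -> x.2 = d.
Definition lab (u : n.-tuple (tree S)) d := forall i, labt (val (tnth u i)) d.

Lemma tnth_upd ts i t j : tnth (upd ts i t) j = if j == i then t else tnth ts j.
Proof. by rewrite tnth_mktuple. Qed.
Lemma tnth_zero j : tnth zero j = tree0 S.
Proof. by rewrite tnth_mktuple. Qed.

Lemma lab_zero d : lab zero d.
Proof. by move=> i x; rewrite tnth_zero /= in_fset0. Qed.
Lemma lab_upd0 u d i : lab u d -> lab (upd u i (tree0 S)) d.
Proof. by move=> H j x; rewrite tnth_upd; case: eqP => _; [rewrite /= in_fset0|apply: H]. Qed.
Lemma lab_delta i c : lab (delta i c) c.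
Proof.
move=> j x; rewrite tnth_upd; case: eqP => _; last by rewrite tnth_zero /= in_fset0.
by rewrite val_leaf in_sing => /eqP ->.
Qed.

Lemma Ftree ts : is_tree (F ts).
Proof. exact: valP. Qed.

Lemma res_eq c ts ts' w :
  (forall i, subst (phres c) (val (tnth ts i)) = subst (phres c) (val (tnth ts' i))) ->
  ((w, c) \in F ts) = ((w, c) \in F ts').
Proof. by move/cp_subst/fsetP/(_ (w, c)); rewrite !in_subst_res eqxx !andbT. Qed.

Lemma M2 u d c w : lab u d -> c != d -> ((w, c) \in F u) = ((w, c) \in Z).
Proof.
move=> Hu cd; apply: res_eq => i; rewrite tnth_zero /= subst0 subst_res0 //.
by move=> x /Hu ->; rewrite eq_sym.
Qed.

Definition other d := if d == a then b else a.
Lemma other_neq d : other d != d.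
Proof. by rewrite /other; case: (d =P a) => [->|/eqP]; rewrite // eq_sym. Qed.

Lemma in_subst_merge d e X w : e != d ->
  ((w, e) \in subst (phsub d (sing e)) X) = ((w, e) \in X) || ((w, d) \in X).
Proof.
move=> ed; apply/idP/orP.
  move/in_subst_sub => [[H _]|[x [y [xX]]]]; first by left.
  by rewrite in_sing => /eqP [->] /= ->; rewrite cats0; right.
move=> [H|H]; apply/in_subst_sub; first by left.
by right; exists w, [::]; rewrite in_sing cats0.
Qed.

Lemma M3 u d w : lab u d -> (w, d) \in Z -> (w, d) \in F u.
Proof.
move=> Hu wZ; set e := other d; have ed : e != d by apply: other_neq.
set phi := phsub d (sing e).
have phit : forall c, is_tree (phi c) by move=> c; rewrite /phi /phsub; case: eqP => _; apply: sing_tree.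
set u' := [tuple mk (subst phi (val (tnth u j))) | j < n].
have vu' : forall j, val (tnth u' j) = subst phi (val (tnth u j)).
  by move=> j; rewrite tnth_mktuple val_mk //; apply: subst_tree => //; apply: valP.
have lu' : lab u' e.
  move=> j x; rewrite vu' => /in_subst_sub [[/Hu -> /negP //]|[x0 [y0 [_]]]].
  by rewrite in_sing => /eqP [].
have Heq : subst phi (F u) = subst phi (F u').
  apply: cp_subst => j; rewrite vu' [RHS]subst_id //.
  by move=> x; rewrite -vu' => /lu' ->.
have := congr1 (fun X => (w, e) \in X) Heq => /=.
rewrite !in_subst_merge // (M2 (u := u') (d := e) (c := d)) // ?wZ ?orbT; last by rewrite eq_sym.
case/orP => //; rewrite (M2 _ Hu ed) => weZ.
have [_ /= ede] := treeW' (z := [::]) (Ftree zero) wZ weZ (esym (cats0 _)).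
by move: ed; rewrite ede eqxx.
Qed.

Lemma Zsub u d c w : lab u d -> (w, c) \in Z -> (w, c) \in F u.
Proof.
move=> Hu; case: (c =P d) => [->|/eqP cd]; first exact: M3.
by rewrite (M2 _ Hu cd).
Qed.

Definition Hd c i x : Prop := (x, c) \in F (delta i c) /\ (x, c) \notin Z.

Lemma step u d c i w : lab u d -> c != d ->
  (w, d) \in F u <-> (w, d) \in F (upd u i (tree0 S)) \/
     exists x y, [/\ Hd c i x, (y, d) \in val (tnth u i) & w = x ++ y].
Proof.
move=> Hu cd.
set U := val (tnth u i).
set v := upd u i (leaf c).
have Heq : subst (phsub c U) (F v) = subst (phsub c U) (F u).
  apply: cp_subst => j; rewrite tnth_upd; case: eqP => [->|_] //.
  by rewrite val_leaf subst_leaf subst_id // => x /Hu ->; rewrite eq_sym.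
have e1 : forall w, ((w, d) \in F v) = ((w, d) \in F (upd u i (tree0 S))).
  move=> w'; apply: res_eq => j; rewrite !tnth_upd; case: eqP => _ //.
  by rewrite val_leaf /= subst0 subst_res0 // => x; rewrite in_sing => /eqP -> /=.
have e2 : forall x, ((x, c) \in F v) = ((x, c) \in F (delta i c)).
  move=> x; apply: res_eq => j; rewrite !tnth_upd; case: eqP => _ //.
  by rewrite tnth_zero /= subst0 subst_res0 // => y /Hu ->; rewrite eq_sym.
have e3 : forall x, ((x, c) \in F u) = ((x, c) \in Z) by move=> x; apply: M2.
have HH := congr1 (fun X => (w, d) \in X) Heq; simpl in HH.
have L : forall X, (w, d) \in subst (phsub c U) X <->
    (w, d) \in X \/ exists x y, [/\ (x, c) \in X, (y, d) \in U & w = x ++ y].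
  move=> X; split.
    by move/in_subst_sub => [[H _]|H]; [left|right].
  move=> H; apply/in_subst_sub; case: H => [H|H]; [left|by right].
  by split => //=; rewrite eq_sym.
have notD : forall x y, (x, c) \in Z -> (x ++ y, d) \in F u -> False.
  move=> x y xZ H; have xu : (x, c) \in F u by rewrite e3.
  have [_ /= E] := treeW' (z := y) (Ftree u) xu H (erefl _).
  by move: cd; rewrite E eqxx.
have notA : forall x y, (x, c) \in Z -> (x ++ y, d) \in F (upd u i (tree0 S)) -> False.
  move=> x y xZ H; have xu : (x, c) \in F (upd u i (tree0 S)) by rewrite (M2 _ (lab_upd0 (i:=i) Hu) cd).
  have [_ /= E] := treeW' (z := y) (Ftree _) xu H (erefl _).
  by move: cd; rewrite E eqxx.
have notB : forall x y x' y', (x, c) \in Z -> Hd c i x' -> x ++ y = x' ++ y' -> False.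
  move=> x y x' y' xZ [x'F x'Z] E.
  have xF : (x, c) \in F (delta i c) := Zsub (lab_delta (i:=i) (c:=c)) xZ.
  have [z [E'|E']] := cat_comparable E.
    have := treeW (Ftree _) xF x'F E'; case => ex.
    by move: x'Z; rewrite -ex xZ.
  have := treeW (Ftree _) x'F xF E'; case => ex.
  by move: x'Z; rewrite ex xZ.
split.
- move=> wFu.
  have : (w, d) \in subst (phsub c U) (F v) by rewrite HH; apply/L; left.
  case/L => [|[x [y [xF yU ew]]]]; first by rewrite e1; left.
  rewrite e2 in xF; case: (boolP ((x, c) \in Z)) => xZ.
    by exfalso; subst w; apply: (notD x y xZ wFu).
  by right; exists x, y.
- case => [wA | [x [y [[xF xZ] yU ew]]]].
    have : (w, d) \in subst (phsub c U) (F u) by rewrite -HH; apply/L; left; rewrite e1.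
    case/L => [//|[x [y [xu yU ew]]]].
    by rewrite e3 in xu; exfalso; subst w; apply: (notA x y xu wA).
  have : (w, d) \in subst (phsub c U) (F u).
    by rewrite -HH; apply/L; right; exists x, y; rewrite e2.
  case/L => [//|[x' [y' [x'u y'U ew']]]].
  rewrite e3 in x'u; exfalso; apply: (notB x' y' x y x'u (conj xF xZ)).
  by rewrite -ew' -ew.
Qed.

Lemma HX c i x : Hd c i x <-> Hd a i x.
Proof.
case: (c =P a) => [->//|/eqP ca].
have dz : upd (delta i c) i (tree0 S) = zero.
  by apply: eq_from_tnth => j; rewrite /delta !tnth_upd !tnth_zero; case: eqP.
have ac : a != c by rewrite eq_sym.
have st := step (c := a) i x (lab_delta (i:=i) (c:=c)) ac.
rewrite dz in st.
split.
- move=> [xF xZ]; case: (st.1 xF) => [xZ'|[x' [y [Hx' yU ex]]]]; first by rewrite xZ' in xZ.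
  move: yU; rewrite tnth_upd eqxx val_leaf in_sing => /eqP [ey].
  by rewrite ex ey cats0.
- move=> [xF xZ]; split.
    apply/st.2; right; exists x, [::]; split => //.
      by rewrite tnth_upd eqxx val_leaf in_sing.
    by rewrite cats0.
  apply/negP => xcZ.
  have xcF := Zsub (lab_delta (i:=i) (c:=a)) xcZ.
  have [_ /= E] := treeW' (z := [::]) (Ftree _) xcF xF (esym (cats0 _)).
  by move: ca; rewrite E eqxx.
Qed.

Lemma char_lab d k : k <= n -> forall u, lab u d ->
  (forall j : 'I_n, k <= j -> tnth u j = tree0 S) -> forall w,
  (w, d) \in F u <-> (w, d) \in Z \/
    exists (i : 'I_n) x y, [/\ i < k, Hd a i x, (y, d) \in val (tnth u i) & w = x ++ y].
Proof.
elim: k => [|k IH] kn u Hu Hz w.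
  have -> : u = zero by apply: eq_from_tnth => j; rewrite tnth_zero Hz.
  by split; [left | case => // [[i [x [y []]]]]].
have kn' : k < n := kn.
set i := Ordinal kn'.
have cd := other_neq d.
have st := step (c := other d) i w Hu cd.
have Hz' : forall j : 'I_n, k <= j -> tnth (upd u i (tree0 S)) j = tree0 S.
  move=> j kj; rewrite tnth_upd; case: (j =P i) => // /eqP ne; apply: Hz.
  rewrite ltn_neqAle kj andbT; apply: contra ne => /eqP e.
  by apply/eqP; apply: val_inj => /=; rewrite e.
have IH' := IH (ltnW kn') (upd u i (tree0 S)) (lab_upd0 (i:=i) Hu) Hz' w.
split.
- move=> /st.1 [H|[x [y [Hx yU ew]]]].
    move: H => /IH'.1 [H|[i' [x [y [i'k Hx yU ew]]]]].
      by left.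
    right; exists i', x, y; split => //; first exact: ltnW.
    move: yU; rewrite tnth_upd; by case: eqP.
  by right; exists i, x, y; split => //; exact: (proj1 (HX _ _ _) Hx).
- case => [wZ|[i' [x [y [i'k Hx yU ew]]]]].
    by apply/st.2; left; apply/IH'.2; left.
  case: (i' =P i) => [ei|nei].
    move: Hx yU; rewrite ei => Hx yU.
    by apply/st.2; right; exists x, y; split => //; exact: (proj2 (HX (other d) _ _) Hx).
  apply/st.2; left; apply/IH'.2; right; exists i', x, y; split => //.
    rewrite ltn_neqAle -ltnS i'k andbT; apply/eqP => e; apply: nei.
    by apply: val_inj; rewrite /= e.
  by rewrite tnth_upd; case: eqP.
Qed.

Lemma char ts d w : (w, d) \in F ts <-> (w, d) \in Z \/
  exists i x y, [/\ Hd a i x, (y, d) \in val (tnth ts i) & w = x ++ y].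
Proof.
set u := [tuple mk (subst (phres d) (val (tnth ts j))) | j < n].
have vu : forall j, val (tnth u j) = subst (phres d) (val (tnth ts j)).
  move=> j; rewrite tnth_mktuple val_mk //; apply: subst_tree; first exact: valP.
  by move=> c; rewrite /phres; case: eqP => _; [exact: sing_tree | exact: is_tree0].
have e : ((w, d) \in F ts) = ((w, d) \in F u).
  by apply: res_eq => j; rewrite vu subst_res_idem.
have lu : lab u d by move=> j x; rewrite vu in_subst_res => /andP [_ /eqP].
have yin : forall i y, ((y, d) \in val (tnth u i)) = ((y, d) \in val (tnth ts i)).
  by move=> i y; rewrite vu in_subst_res eqxx andbT.
have Hz : forall j : 'I_n, n <= j -> tnth u j = tree0 S by move=> j; rewrite leqNgt ltn_ord.
have H := char_lab (leqnn n) lu Hz w.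
rewrite e H; split.
  case => [|[i [x [y [_ Hx yU ew]]]]]; first by left.
  by right; exists i, x, y; rewrite -yin.
case => [|[i [x [y [Hx yU ew]]]]]; first by left.
by right; exists i, x, y; rewrite yin.
Qed.

Definition Xs i : {fset seq bool} :=
  [fset x.1 | x in F (delta i a) & (x.2 == a) && (x \notin Z)].

Lemma in_Xs i x : (x \in Xs i) <-> Hd a i x.
Proof.
split.
  move/imfsetP => [y]; rewrite inE => /andP [yF /andP [/eqP ya yZ]] ->.
  by case: y yF yZ ya => y1 y2 /= yF yZ ya; subst y2; split.
move=> [xF xZ]; apply/imfsetP; exists (x, a) => //.
by rewrite inE xF eqxx xZ.
Qed.

Definition Pset : {fset word (S + 'I_n)} :=
  [fset (x.1, @inl S 'I_n x.2) | x in Z] `|`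
  \bigcup_(i <- enum 'I_n) [fset (x, @inr S 'I_n i) | x in Xs i].

Lemma in_Pset_l x c : ((x, inl c) \in Pset) = ((x, c) \in Z).
Proof.
apply/idP/idP.
  rewrite in_fsetU => /orP [/imfsetP [y yZ [-> ->]]|].
    by rewrite -surjective_pairing.
  by move/bigfcupP => [i _ /imfsetP [y _ []]].
by move=> xZ; rewrite in_fsetU; apply/orP; left; apply/imfsetP; exists (x, c).
Qed.

Lemma in_Pset_r x i : (x, inr i) \in Pset <-> Hd a i x.
Proof.
split.
  rewrite in_fsetU => /orP [/imfsetP [y _ []]//|].
  by move/bigfcupP => [j _ /imfsetP [y /in_Xs yX [-> ->]]].
move/in_Xs => xX; rewrite in_fsetU; apply/orP; right; apply/bigfcupP.
exists i; first by rewrite mem_enum.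
by apply/imfsetP; exists x.
Qed.

Lemma HdF i x : Hd a i x -> (x, a) \in F (delta i a).
Proof. by case. Qed.

Lemma Pkey p q z : p \in Pset -> q \in Pset -> q.1 = p.1 ++ z -> p = q.
Proof.
case: p => x1 [c1|i1]; case: q => x2 [c2|i2] /=.
- rewrite !in_Pset_l => p1 p2 E.
  by have [-> ->] := treeW (Ftree zero) p1 p2 E.
- rewrite in_Pset_l => p1 /in_Pset_r [p2 p2Z] E.
  have p1F := Zsub (lab_delta (i:=i2) (c:=a)) p1.
  have [e1 e2] := treeW (Ftree _) p1F p2 E.
  by move: p2Z; rewrite -e1 -e2 p1.
- move=> /in_Pset_r [p1 p1Z]; rewrite in_Pset_l => p2 E.
  have p2F := Zsub (lab_delta (i:=i1) (c:=a)) p2.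
  have [e1 e2] := treeW (Ftree _) p1 p2F E.
  by move: p1Z; rewrite e1 e2 p2.
- move=> /in_Pset_r H1 /in_Pset_r H2 E.
  case: (i1 =P i2) => [ei|/eqP nei]; last have nei' : i2 != i1 by rewrite eq_sym.
    subst i2; have [->] := treeW (Ftree _) (HdF H1) (HdF H2) E; reflexivity.
  set ts := upd (delta i1 a) i2 (leaf b).
  have m1 : (x1, a) \in F ts.
    apply/char; right; exists i1, x1, [::]; split => //; last by rewrite cats0.
    rewrite /ts tnth_upd; case: eqP => [e|_]; first by move: nei; rewrite e eqxx.
    by rewrite /delta tnth_upd eqxx val_leaf in_sing.
  have m2 : (x2, b) \in F ts.
    apply/char; right; exists i2, x2, [::]; split => //; last by rewrite cats0.
    by rewrite /ts tnth_upd eqxx val_leaf in_sing.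
  have [_ eab] := treeW (Ftree _) m1 m2 E.
  by move: Hab; rewrite eab eqxx.
Qed.

Lemma Ptree : is_tree Pset.
Proof.
apply/is_treeP => p q pP qP.
case E: (p == q); first by left; apply/eqP.
right; split; apply/negP => /prefixP [z Hz].
  by move: E; rewrite (Pkey pP qP Hz) eqxx.
by move: E; rewrite (Pkey qP pP Hz) eqxx.
Qed.

Lemma F_subst ts : F ts = subst (psi ts) Pset.
Proof.
apply/fsetP => [[w d]]; apply/idP/idP.
  move/char => [wZ|[i [x [y [Hx yt ->]]]]]; apply/in_subst.
    exists (w, inl d), ([::], d); split => //=.
    - by rewrite in_Pset_l.
    - by rewrite in_fset1.
    - by rewrite cats0.
  exists (x, inr i), (y, d); split => //=.
  by apply/in_Pset_r.
move/in_subst => [[x k] [q [pP qp E]]]; case: k pP qp E => [c|i] /=.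
  rewrite in_Pset_l => xZ; rewrite in_fset1 => /eqP -> [-> ->].
  by apply/char; left; rewrite cats0.
move=> /in_Pset_r Hx qt [-> ->]; apply/char; right; exists i, x, q.1; split => //.
by rewrite -surjective_pairing.
Qed.

Lemma final : exists P : tree (S + 'I_n)%type, forall ts, g ts = poly_fun P ts.
Proof.
exists (exist _ Pset Ptree) => ts; apply: val_inj.
rewrite /poly_fun (_ : val (exist _ Pset Ptree) = Pset) // evalF_subst //; last exact: Ptree.
by rewrite -F_subst insubdK //; apply: valP.
Qed.
End Main.

Unset Implicit Arguments.
Local Close Scope fset_scope.

Theorem mainTheorem1 (S : choiceType) (n : nat)
    (HS : exists a b c : S, [/\ a != b, b != c & a != c])
    (Hn : 0 < n)
    (g : n.-tuple (tree S) -> tree S) :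
  congruence_preserving g ->
  exists P : tree (S + 'I_n)%type, forall ts : n.-tuple (tree S), g ts = poly_fun P ts.
Proof.
move=> Hg; case: HS => a [b [c [ab _ _]]].
exact: (@final S n g Hg a b ab).
Qed.
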